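(* For every network $\mathcal N=(\mathcal G,S,\rho)$, every prime power $q$ and every nonnegative integer security level $r$, the secure computing capacity of the algebraic sum $f$ over $\mathbb F_q$ satisfies $$\widehat{\mathcal C}(\mathcal N,f,r)\le \min_{\substack{(W,C)\in\mathcal W_r\times\Lambda(\mathcal N):\\ W\subseteq C,\ D_W\subseteq I_C}}\big(|C|-|W|\big).$$
   Context: Network model: $\mathcal G=(\mathcal V,\mathcal E)$ is a finite directed acyclic graph (multiple edges between two nodes allowed). For $e\in\mathcal E$, $\mathrm{tail}(e)$ and $\mathrm{head}(e)$ denote its tail and head; $\mathcal E_{\rm in}(u)$, $\mathcal E_{\rm out}(u)$ are the sets of input and output edges of node $u$. A path from node $u$ (or edge $e_1$) to node $v$ (or edge $e_m$) is a sequence of edges $(e_1,\dots,e_m)$ with $\mathrm{tail}(e_1)=u$, $\mathrm{head}(e_m)=v$, $\mathrm{tail}(e_i)=\mathrm{head}(e_{i-1})$; a single edge is a path from itself to itself. For a node $\sigma$ and edge $e$, $\sigma\to e$ means there is a path from $\sigma$ whose last edge is $e$. $S=\{\sigma_1,\dots,\sigma_s\}\subset\mathcal V$ is the set of source nodes, each with no input edges; $\rho\in\mathcal V\setminus S$ is the sink, with no output edges; every node $u\ne\rho$ has a directed path to $\rho$; the sources are exactly the nodes without input edges. $\mathcal N=(\mathcal G,S,\rho)$. For disjoint node sets $U,V$, a cut separating $V$ from $U$ is an edge set $C$ such that after deleting $C$ there is no path from any $u\in U$ to any $v\in V$; $\mathrm{mincut}(U,V)$ is the minimum size of such a cut, and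 $\mathrm{mincut}(u,v)$ for singletons. Cut sets: for $C\subseteq\mathcal E$, $D_C=\{\sigma\in S:\exists e\in C,\ \sigma\to e\}$, $I_C=\{\sigma\in S:$ there is no path from $\sigma$ to $\rho$ after deleting the edges of $C\}$; $\Lambda(\mathcal N)=\{C\subseteq\mathcal E: I_C\neq\emptyset\}$. For a nonnegative integer $r$ (the security level), $\mathcal W_r=\{W\subseteq\mathcal E:|W|\le r\}$ (it contains $\emptyset$). Secure model: $q$ is a prime power and $f:\mathbb F_q^s\to\mathbb F_q$, $f(m_1,\dots,m_s)=\sum_{i=1}^s m_i$; each edge carries one symbol of $\mathbb F_q$ per network use. For positive integers $\ell,n$, an $(\ell,n)$ secure network code is as follows. Source $\sigma_i$ holds a message $\mathbf M_i=(M_{i,1},\dots,M_{i,\ell})$ of i.i.d. uniform elements of $\mathbb F_q$ and a key $\mathbf K_i$ uniform on a finite set $\mathcal K_i$ (chosen as part of the code); all $\mathbf M_i,\mathbf K_i$ are mutually independent. For each edge $e$ there is a local encoding function: if $\mathrm{tail}(e)=\sigma_i$, a map $\mathbb F_q^\ell\times\mathcal K_i\to\mathbb F_q^n$ applied to $(\mathbf m_i,\mathbf k_i)$; otherwise a map $\prod_{d\in\mathcal E_{\rm in}(\mathrm{tail}(e))}\mathbb F_q^n\to\mathbb F_q^n$ applied to the messages on the input edges of $\mathrm{tail}(e)$. There is a decoding function $\psi:\prod_{d\in\mathcal E_{\rm in}(\rho)}\mathbb F_q^n\to\mathbb F_q^\ell$. Recursively, the message $\mathbf Y_e$ on each edge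 is a function of $(\mathbf M_S,\mathbf K_S)$, where $\mathbf M_S=(\mathbf M_1,\dots,\mathbf M_s)$, $\mathbf K_S=(\mathbf K_1,\dots,\mathbf K_s)$; $\mathbf Y_W=(\mathbf Y_e:e\in W)$. The code is admissible (for security level $r$) if (computability) for all values $\mathbf m_S,\mathbf k_S$ the decoder outputs $\sum_{i=1}^s\mathbf m_i$ (componentwise sum in $\mathbb F_q^\ell$), and (security) $I(\mathbf Y_W;\mathbf M_S)=0$ for every $W\in\mathcal W_r$. Its rate is $\ell/n$. $R\ge0$ is achievable if for every $\epsilon>0$ there is an admissible $(\ell,n)$ code with $\ell/n>R-\epsilon$. The secure computing capacity $\widehat{\mathcal C}(\mathcal N,f,r)$ is the maximum achievable rate. *)

(* Defs.v *)
From HB Require Import structures.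
From mathcomp Require Import all_boot all_order all_algebra.
From mathcomp Require Import reals exp.

Unset Implicit Arguments.
Unset Strict Implicit.
Unset Printing Implicit Defensive.

Import Order.TTheory GRing.Theory Num.Theory.
Local Open Scope ring_scope.

Section Graph.
Variables (V E : finType) (tail head : E -> V).

Definition epath (e1 : E) (es : seq E) : bool :=
  path (fun d e => head d == tail e) e1 es.

Definition path_avoiding (ok : E -> bool) (u v : V) : Prop :=
  exists (e1 : E) (es : seq E),
    [/\ epath e1 es, tail e1 = u, head (last e1 es) = v & all ok (e1 :: es)].

Definition node_path (u v : V) : Prop := path_avoiding (fun _ => true) u v.

Definition reaches_edge (u : V) (e : E) : Prop :=
  exists (e1 : E) (es : seq E), [/\ epath e1 es, tail e1 = u & last e1 es = e].

Definition acyclic : Prop := forall u : V, ~ node_path u u.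

(* The network N = (G, S, rho): the sources are S = {sigma_0, ..., sigma_{s-1}}
   given by an injective map sigma : 'I_s -> V. *)
Definition network (s : nat) (sigma : 'I_s -> V) (rho : V) : Prop :=
  [/\ acyclic,
      injective sigma,
      (forall i : 'I_s, sigma i != rho) &
    [/\
      (forall (i : 'I_s) (e : E), head e != sigma i),
      (forall e : E, tail e != rho),
      (forall u : V, u != rho -> node_path u rho) &
      (forall u : V, (forall e : E, head e != u) -> exists i : 'I_s, sigma i = u)]].

Definition D_set (s : nat) (sigma : 'I_s -> V) (C : {set E}) (v : V) : Prop :=
  (exists i : 'I_s, sigma i = v) /\ exists2 e, e \in C & reaches_edge v e.

Definition I_set (s : nat) (sigma : 'I_s -> V) (rho : V) (C : {set E}) (v : V)
  : Prop :=
  (exists i : 'I_s, sigma i = v) /\ ~ path_avoiding (fun e => e \notin C) v rho.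

Definition in_Lambda (s : nat) (sigma : 'I_s -> V) (rho : V) (C : {set E})
  : Prop := exists v, I_set s sigma rho C v.

End Graph.

Section MutualInformation.
Variables (R : realType) (Omega A B : finType).

Definition uprob (P : pred Omega) : R := #|[set w | P w]|%:R / #|Omega|%:R.

Definition mutual_info (X : Omega -> A) (Y : Omega -> B) : R :=
  \sum_(a : A) \sum_(b : B)
     let pab := uprob (fun w => (X w == a) && (Y w == b)) in
     let pa := uprob (fun w => X w == a) in
     let pb := uprob (fun w => Y w == b) in
     if pab == 0 then 0 else pab * ln (pab / (pa * pb)).

End MutualInformation.

Section Codes.
Variables (V E : finType) (tail head : E -> V) (s : nat) (sigma : 'I_s -> V)
          (rho : V) (F : finFieldType) (l n : nat).

Record code := Code {
  keyT : 'I_s -> finType;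
  enc_src : forall i : 'I_s, E -> 'rV[F]_l -> keyT i -> 'rV[F]_n;
  enc_int : forall e : E, ({d : E | head d == tail e} -> 'rV[F]_n) -> 'rV[F]_n;
  dec : ({d : E | head d == rho} -> 'rV[F]_n) -> 'rV[F]_l }.

Definition msgT := {ffun 'I_s -> 'rV[F]_l}.
Definition keysT (c : code) := {dffun forall i : 'I_s, keyT c i}.

Definition code_step (c : code) (m : msgT) (k : keysT c)
    (Y : {ffun E -> 'rV[F]_n}) : {ffun E -> 'rV[F]_n} :=
  [ffun e => match [pick i : 'I_s | sigma i == tail e] with
             | Some i => enc_src c i e (m i) (k i)
             | None => enc_int c e (fun d => Y (val d))
             end].

(* The message Y_e on each edge as a function of (m_S, k_S).  Since the
   graph is acyclic, every path has at most #|E| edges, so #|E| rounds of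
   the local recursion determine all edge messages. *)
Definition edge_msgs (c : code) (m : msgT) (k : keysT c) : {ffun E -> 'rV[F]_n} :=
  iter #|E| (code_step c m k) [ffun => 0].

(* sample space of (M_S, K_S), uniform *)
Definition sampleT (c : code) := (msgT * keysT c)%type.

Definition Y_W (c : code) (W : {set E}) (w : sampleT c)
  : {ffun {e : E | e \in W} -> 'rV[F]_n} :=
  [ffun e => edge_msgs c w.1 w.2 (val e)].

Definition M_S (c : code) (w : sampleT c) : msgT := w.1.

Definition admissible (R : realType) (r : nat) (c : code) : Prop :=
  [/\ (forall i : 'I_s, 0 < #|keyT c i|)%N,
      (forall (m : msgT) (k : keysT c),
          dec c (fun d => edge_msgs c m k (val d)) = \sum_(i < s) m i) &
      (forall W : {set E}, (#|W| <= r)%N ->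
          mutual_info R (sampleT c) _ _ (Y_W c W) (M_S c) = 0)].

End Codes.

Definition achievable (R : realType) (V E : finType) (tail head : E -> V)
    (s : nat) (sigma : 'I_s -> V) (rho : V) (F : finFieldType) (r : nat)
    (Rate : R) : Prop :=
  0 <= Rate /\
  forall eps : R, 0 < eps ->
    exists (l n : nat) (c : code V E tail head s rho F l n),
      [/\ (0 < l)%N, (0 < n)%N, admissible V E tail head s sigma rho F l n R r c &
          Rate - eps < l%:R / n%:R].

(* Main.v *)
Require Import Defs.
From HB Require Import structures.
From mathcomp Require Import all_boot all_order all_algebra.
From mathcomp Require Import reals exp.
From mathcomp Require Import lra.
From Stdlib Require Import FunctionalExtensionality ClassicalEpsilon.
Import Order.TTheory GRing.Theory Num.Theory.
Local Open Scope ring_scope.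

Lemma ln_le_sub1 (R : realType) (x : R) : 0 < x -> ln x <= x - 1.
Proof.
move=> x0; have := expR_ge1Dx (ln x); rewrite lnK ?posrE // => h.
by rewrite lerBrDl.
Qed.

Lemma ln_ge_1V (R : realType) (x : R) : 0 < x -> 1 - x^-1 <= ln x.
Proof.
move=> x0; have := @ln_le_sub1 R x^-1; rewrite invr_gt0 => /(_ x0); rewrite lnV ?posrE //.
move=> h; lra.
Qed.

Section MI.
Variables (R : realType) (Omega : finType).

Lemma card_part (B : finType) (P : pred Omega) (Y : Omega -> B) :
  (\sum_(b : B) #|[set w | P w && (Y w == b)]| = #|[set w | P w]|)%N.
Proof.
rewrite -sum1_card (partition_big (P:=mem [set w | P w]) Y predT) //=.
apply: eq_bigr => b _; rewrite -sum1_card; apply: eq_bigl => w; by rewrite !inE.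
Qed.

Lemma uprob_ge0 (P : pred Omega) : 0 <= uprob R Omega P.
Proof. by rewrite /uprob divr_ge0. Qed.

Lemma uprob_sub (P Q : pred Omega) : (forall w, P w -> Q w) -> uprob R Omega P <= uprob R Omega Q.
Proof.
move=> h; rewrite /uprob ler_wpM2r ?invr_ge0 // ler_nat; apply: subset_leq_card.
by apply/subsetP => w; rewrite !inE => /h.
Qed.

Lemma uprob_sum (B : finType) (P : pred Omega) (Y : Omega -> B) :
  \sum_(b : B) uprob R Omega (fun w => P w && (Y w == b)) = uprob R Omega P.
Proof.
by rewrite /uprob -mulr_suml -natr_sum card_part.
Qed.

Lemma uprob_T (B : finType) (Y : Omega -> B) : (0 < #|Omega|)%N ->
  \sum_(b : B) uprob R Omega (fun w => Y w == b) = 1.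
Proof.
move=> h; rewrite (eq_bigr (fun b => uprob R Omega (fun w => predT w && (Y w == b)))) //.
rewrite uprob_sum /uprob.
have -> : [set w | predT w] = [set: Omega] by apply/setP => w; rewrite !inE.
by rewrite cardsT divff // pnatr_eq0 -lt0n.
Qed.

Lemma uprob_gt0 (P : pred Omega) w : P w -> 0 < uprob R Omega P.
Proof.
move=> Pw; rewrite /uprob divr_gt0 // ltr0n; apply/card_gt0P; exists w => //.
by rewrite inE.
Qed.

Lemma uprob_eq0 (P : pred Omega) : uprob R Omega P = 0 -> forall w, ~~ P w.
Proof.
move=> h w; apply/negP => Pw; have := @uprob_gt0 P w Pw; by rewrite h ltxx.
Qed.

Lemma sum_lt (I : finType) (f g : I -> R) (i0 : I) :
  (forall i, f i <= g i) -> f i0 < g i0 -> \sum_i f i < \sum_i g i.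
Proof.
move=> h h0; rewrite (bigD1 i0) //= [X in _ < X](bigD1 i0) //=.
by apply: ltr_leD => //; apply: ler_sum.
Qed.

Lemma mi0_indep (A B : finType) (X : Omega -> A) (Y : Omega -> B) :
  mutual_info R Omega A B X Y = 0 ->
  forall a b, (exists w, X w = a) -> (exists w, Y w = b) ->
  exists w, X w = a /\ Y w = b.
Proof.
move=> hI a0 b0 [wa ha] [wb hb].
have Opos : (0 < #|Omega|)%N by apply/card_gt0P; exists wa.
set pab := fun a b => uprob R Omega (fun w => (X w == a) && (Y w == b)).
set pa := fun a => uprob R Omega (fun w => X w == a).
set pb := fun b => uprob R Omega (fun w => Y w == b).
have key : forall a b, pab a b - pa a * pb b <=
   (if pab a b == 0 then 0 else pab a b * ln (pab a b / (pa a * pb b))).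
  move=> a b; case: eqP => [->|/eqP nz].
    by rewrite sub0r oppr_le0 mulr_ge0 // uprob_ge0.
  have gab : 0 < pab a b by rewrite lt0r nz uprob_ge0.
  have ga : 0 < pa a by apply: lt_le_trans gab _; apply: uprob_sub => w /andP[].
  have gb : 0 < pb b by apply: lt_le_trans gab _; apply: uprob_sub => w /andP[].
  have := @ln_ge_1V R _ (divr_gt0 gab (mulr_gt0 ga gb)).
  move/(ler_wpM2l (ltW gab)); apply: le_trans.
  by rewrite mulrBr mulr1 invf_div [X in _ <= _ - X]mulrCA divff ?mulr1 // gt_eqF.
case: (boolP (pab a0 b0 == 0)) => [/eqP z|nz0]; last first.
  have : (0 < #|[set w | (X w == a0) && (Y w == b0)]|)%N.
    rewrite lt0n; apply/negP => /eqP h; move: nz0.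
    by rewrite /pab /uprob h mul0r eqxx.
  by case/card_gt0P=> w; rewrite inE => /andP[/eqP <- /eqP <-]; exists w.
exfalso.
have sab : \sum_a \sum_b pab a b = 1.
  rewrite (eq_bigr (fun a => pa a)); first by rewrite /pa uprob_T.
  by move=> a _; rewrite /pab uprob_sum.
have sp : \sum_a \sum_b (pa a * pb b) = 1.
  rewrite (eq_bigr (fun a => pa a * 1)).
    by under eq_bigr do rewrite mulr1; rewrite /pa uprob_T.
  by move=> a _; rewrite -mulr_sumr /pb uprob_T.
have ga : 0 < pa a0 by apply: (@uprob_gt0 _ wa); rewrite ha.
have gb : 0 < pb b0 by apply: (@uprob_gt0 _ wb); rewrite hb.
have s0 : \sum_a \sum_b (pab a b - pa a * pb b) = 0.
  by under eq_bigr do rewrite sumrB; rewrite sumrB sab sp subrr.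
have : \sum_a \sum_b (pab a b - pa a * pb b) < mutual_info R Omega A B X Y.
  apply: (@sum_lt _ _ _ a0) => [a|]; first by apply: ler_sum => b _; apply: key.
  apply: (@sum_lt _ _ _ b0) => [b|]; first by apply: key.
  by rewrite /= -/(pab a0 b0) z eqxx sub0r oppr_lt0 mulr_gt0.
by rewrite s0 hI ltxx.
Qed.
End MI.

Section G.
Variables (V E : finType) (tail head : E -> V) (s : nat) (sigma : 'I_s -> V)
          (rho : V) (F : finFieldType) (l n : nat).

Definition bounded (j : nat) (e : E) : Prop :=
  forall e1 es, epath V E tail head e1 es -> last e1 es = e -> (size es < j)%N.

Lemma uniq_epath : acyclic V E tail head ->
  forall es e1, epath V E tail head e1 es -> uniq (e1 :: es).
Proof.
move=> hac; elim=> [//|e2 es IH] e1 hp.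
have hp' := hp; move: hp' => /= /andP[h12 hp2].
move: (IH e2 hp2) => /= /andP[-> ->]; rewrite !andbT.
apply/negP; move: hp; rewrite /epath; move: (e2 :: es) => t hp.
move=> hin; move: hp; case/splitPr: hin => p1 p2.
rewrite cat_path /= => /and3P[hp1 hl _].
apply: (hac (tail e1)); exists e1, p1; split => //.
by apply/eqP.
by apply/allP.
Qed.

Lemma bounded_all : acyclic V E tail head -> forall e, bounded #|E| e.
Proof.
move=> hac e e1 es hp _.
have hu := uniq_epath hac es e1 hp.
have := max_card (mem (e1 :: es)); rewrite (card_uniqP hu) /=.
done.
Qed.

Lemma bounded_in j e d : bounded j.+1 e -> head d == tail e -> bounded j d.
Proof.
move=> hb hd e1 es hp hl.
have := hb e1 (rcons es e); rewrite size_rcons ltnS; apply => //.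
  by rewrite /epath rcons_path; apply/andP; split => //; rewrite hl.
by rewrite last_rcons.
Qed.

Lemma bounded0 e : ~ bounded 0 e.
Proof. by move=> h; have := h e [::] isT erefl. Qed.

Notation code := (code V E tail head s rho F l n).
Notation step := (code_step V E tail head s sigma rho F l n).
Notation emsgs := (edge_msgs V E tail head s sigma rho F l n).

Lemma iter_agree (c : code) m k j (Y Y' : {ffun E -> 'rV[F]_n}) e :
  bounded j e -> iter j (step c m k) Y e = iter j (step c m k) Y' e.
Proof.
elim: j e => [|j IH] e hb; first by case: (bounded0 _ hb).
rewrite /= !ffunE; case: pickP => // hn.
apply: f_equal; apply: functional_extensionality => d.
by apply: IH; apply: bounded_in _ _ _ hb (valP d).
Qed.

Lemma emsgs_fix (c : code) m k : acyclic V E tail head ->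
  step c m k (emsgs c m k) = emsgs c m k.
Proof.
move=> hac; apply/ffunP => e.
rewrite /edge_msgs -iterS iterSr; apply: iter_agree; exact: bounded_all.
Qed.

Lemma local_agree (c : code) m k m' k' (P : E -> Prop) :
  acyclic V E tail head ->
  (forall e, P e -> emsgs c m k e = emsgs c m' k' e \/
     ((forall i, sigma i == tail e -> m i = m' i /\ k i = k' i) /\
      (forall d, head d == tail e -> P d))) ->
  forall e, P e -> emsgs c m k e = emsgs c m' k' e.
Proof.
move=> hac hP.
suff : forall j e, bounded j e -> P e -> emsgs c m k e = emsgs c m' k' e.
  by move=> h e; apply: h; apply: bounded_all.
elim=> [|j IH] e hb pe; first by case: (bounded0 _ hb).
case: (hP e pe) => [//|[hs hd]].
rewrite -(emsgs_fix c m k hac) -(emsgs_fix c m' k' hac) !ffunE.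
case: pickP => [i hi|hn].
  by case: (hs i hi) => -> ->.
apply: f_equal; apply: functional_extensionality => d.
by apply: IH; [apply: bounded_in _ _ _ hb (valP d) | apply: hd (valP d)].
Qed.
End G.

Lemma key_bound (R : realType) (V E : finType) (tail head : E -> V)
    (s : nat) (sigma : 'I_s -> V) (rho : V)
    (HN : network V E tail head s sigma rho)
    (F : finFieldType) (r : nat) (W C : {set E})
    (HW : (#|W| <= r)%N)
    (HC : in_Lambda V E tail head s sigma rho C)
    (HWC : W \subset C)
    (HDI : forall v : V, D_set V E tail head s sigma W v ->
                         I_set V E tail head s sigma rho C v)
    (l n : nat) (c : code V E tail head s rho F l n)
    (adm : admissible V E tail head s sigma rho F l n R r c) :
  (l <= n * (#|C| - #|W|))%N.
Proof.
case: HN => hac _ _ _.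
case: adm => hkey hcomp hsec.
case: HC => v [[i0 hi0] hnp]; subst v.
pose I i := I_set V E tail head s sigma rho C (sigma i).
have hI0 : I i0 by split; [exists i0|].
pose emsgs := edge_msgs V E tail head s sigma rho F l n c.
pose k0 : keysT V E tail head s rho F l n c :=
  finfun (fun i => xchoose (card_gt0P (hkey i))).
pose m0 : msgT s F l := [ffun => 0].
pose YW := Y_W V E tail head s sigma rho F l n c W.
pose w0 := YW (m0, k0).
have hex : forall m, exists k, YW (m, k) = w0.
  move=> m.
  have := @mi0_indep R _ _ _ _ _ (hsec W HW) w0 m.
  case => [|| [m' k] [h1 h2]]; first by exists (m0, k0).
    by exists (m, k0).
  by exists k; rewrite /M_S /= in h2; rewrite -h2.
pose mt (t : 'rV[F]_l) : msgT s F l := [ffun i => if i == i0 then t else 0].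
pose kt t := odflt k0 [pick k | YW (mt t, k) == w0].
have hkt : forall t, YW (mt t, kt t) = w0.
  move=> t; rewrite /kt; case: pickP => [k /eqP //|hn].
  by case: (hex (mt t)) => k hk; move: (hn k); rewrite hk eqxx.
pose k't t : keysT V E tail head s rho F l n c :=
  finfun (fun i => if excluded_middle_informative (I i) then kt t i else k0 i).
have hA : forall t, YW (mt t, k't t) = w0.
  move=> t; rewrite -(hkt t); apply/ffunP => e; rewrite !ffunE.
  pose P e := forall i, reaches_edge V E tail head (sigma i) e ->
                 D_set V E tail head s sigma W (sigma i).
  apply: (local_agree _ _ _ _ _ _ _ _ _ _ _ _ _ _ _ P) => //; last first.
    move=> i hr; split; first by exists i.
    by exists (val e) => //; exact: (valP e).
  move=> e' pe; right; split.
    move=> i /eqP hi; split => //.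
    have : I i.
      apply: HDI; apply: pe; exists e', [::]; split => //.
    by move=> hIi; rewrite /k't ffunE; case: excluded_middle_informative.
  move=> d hd i [e1 [es [hp ht hl]]]; apply: pe.
  exists e1, (rcons es e'); split => //.
    by rewrite /epath rcons_path; apply/andP; split => //; rewrite hl.
  by rewrite last_rcons.
pose f t : {ffun {e | e \in C :\: W} -> 'rV[F]_n} :=
  [ffun e => emsgs (mt t) (k't t) (val e)].
have hsum : forall t, \sum_i mt t i = t.
  move=> t0; rewrite (bigD1 i0) //= big1 => [|i /negbTE hi]; last by rewrite ffunE hi.
  by rewrite ffunE eqxx addr0.
have finj : injective f.
  move=> t t' heq.
  rewrite -(hsum t) -(hsum t') -(hcomp (mt t) (k't t)) -(hcomp (mt t') (k't t')); apply: f_equal.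
  apply: functional_extensionality => d.
  pose P e := e \in C \/ forall i, (exists e1 es, [/\ epath V E tail head e1 es,
      tail e1 = sigma i, last e1 es = e & all (fun x => x \notin C) (e1 :: es)]) -> ~ I i.
  apply: (local_agree _ _ _ _ _ _ _ _ _ _ _ _ _ _ _ P) => //; last first.
    case: (boolP (val d \in C)) => h; [left|right] => //.
    move=> i [e1 [es [hp ht hl ha]]] [_ hnq]; apply: hnq.
    exists e1, es; split => //; rewrite hl; apply/eqP; exact: (valP d).
  move=> e pe; case: (boolP (e \in C)) => heC.
    left; case: (boolP (e \in W)) => heW.
      have h1 := congr1 (fun g : {ffun {e : E | e \in W} -> 'rV[F]_n} => g (exist _ e heW)) (hA t).
      have h2 := congr1 (fun g : {ffun {e : E | e \in W} -> 'rV[F]_n} => g (exist _ e heW)) (hA t').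
      rewrite /= !ffunE /= in h1 h2; by rewrite h1 h2.
    have heCW : e \in C :\: W by rewrite inE heW heC.
    have := congr1 (fun g : {ffun {e : E | e \in C :\: W} -> 'rV[F]_n} => g (exist _ e heCW)) heq.
    by rewrite !ffunE.
  case: pe => [h|pe]; first by rewrite h in heC.
  right; split.
    move=> i /eqP hi.
    have nI : ~ I i.
      by apply: pe; exists e, [::]; split => //=; rewrite heC.
    have hne : i != i0 by apply/eqP => hh; apply: nI; rewrite hh.
    rewrite !ffunE (negbTE hne); split => //.
    by case: excluded_middle_informative.
  move=> d0 hd; case: (boolP (d0 \in C)) => hdC; [left | right] => //.
  move=> i [e1 [es [hp ht hl ha]]]; apply: pe; exists e1, (rcons es e); split => //.
      by rewrite /epath rcons_path; apply/andP; split => //; rewrite hl.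
    by rewrite last_rcons.
  by rewrite -rcons_cons all_rcons heC.
have hcard : #|{: {e : E | e \in C :\: W}}| = (#|C| - #|W|)%N.
  have -> : (#|C| - #|W|)%N = #|C :\: W| by rewrite cardsD (setIidPr HWC).
  by rewrite card_sig; apply: eq_card.
have := leq_card f finj.
rewrite card_mx card_ffun card_mx hcard -expnM leq_exp2l ?card_finNzRing_gt1 //.
by rewrite !mul1n.
Qed.

Theorem theorem1 (R : realType) (V E : finType) (tail head : E -> V)
    (s : nat) (sigma : 'I_s -> V) (rho : V)
    (HN : network V E tail head s sigma rho)
    (F : finFieldType) (r : nat) (Rate : R)
    (Hach : achievable R V E tail head s sigma rho F r Rate)
    (W C : {set E})
    (HW : (#|W| <= r)%N)
    (HC : in_Lambda V E tail head s sigma rho C)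
    (HWC : W \subset C)
    (HDI : forall v : V, D_set V E tail head s sigma W v ->
                         I_set V E tail head s sigma rho C v) :
  Rate <= (#|C| - #|W|)%:R.
Proof.
case: Hach => hR0 hach.
rewrite leNgt; apply/negP => hlt.
have heps : 0 < Rate - (#|C| - #|W|)%:R by rewrite subr_gt0.
case: (hach _ heps) => l [n [c [hl hn adm hrate]]].
have hb := @key_bound R _ _ _ _ _ _ _ HN _ _ _ _ HW HC HWC HDI _ _ _ adm.
have h2 : l%:R / n%:R <= (#|C| - #|W|)%:R :> R.
  by rewrite ler_pdivrMr ?ltr0n // -natrM ler_nat mulnC.
lra.
Qed.
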